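(* In the ring $\mathbb{Q}(a,b)[[q]]$ of formal power series in $q$ with coefficients rational functions of $a,b$, \[ 1+\sum_{n=1}^{\infty}\frac{q^{n}}{(aq;q)_n\,(bq;q)_n} =(1-a^{-1})\left(1+\sum_{n=1}^{\infty}\frac{(-1)^{n}q^{\binom{n+1}{2}}b^{n}a^{-n}}{(bq;q)_n}\right) +a^{-1}\sum_{n=0}^{\infty}(-1)^{n}q^{\binom{n+1}{2}}b^{n}a^{-n}\prod_{k=1}^{\infty}\frac{1}{(1-aq^{k})(1-bq^{k})}. \]
   Context: For an indeterminate or element $p$ and $n\ge 0$, $(p;q)_n=(1-p)(1-pq)\cdots(1-pq^{n-1})$, so $(aq;q)_n=(1-aq)(1-aq^2)\cdots(1-aq^n)$. *)

(* Defs.v *)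
From HB Require Import structures.
From mathcomp Require Import all_boot all_order all_algebra.
Set Implicit Arguments. Unset Strict Implicit. Unset Printing Implicit Defensive.
Import Order.TTheory GRing.Theory Num.Theory.
Local Open Scope ring_scope.

(* The field Q(a,b) = fraction field of Q[b][a]. *)
Definition Qab : fieldType := {fraction {poly {poly rat}}}.
Definition var_a : Qab := FracField.tofrac ('X : {poly {poly rat}}).
Definition var_b : Qab := FracField.tofrac ((('X : {poly rat}))%:P : {poly {poly rat}}).

Section PowerSeries.
Variable K : fieldType.

(* formal power series in q: n |-> coefficient of q^n *)
Definition ps := nat -> K.

Definition ps_const (c : K) : ps := fun n => if n == 0%N then c else 0.
Definition ps_zero : ps := ps_const 0.
Definition ps_one : ps := ps_const 1.
Definition ps_add (f g : ps) : ps := fun n => f n + g n.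
Definition ps_opp (f : ps) : ps := fun n => - f n.
Definition ps_sub (f g : ps) : ps := ps_add f (ps_opp g).
Definition ps_scale (c : K) (f : ps) : ps := fun n => c * f n.
Definition ps_mul (f g : ps) : ps :=
  fun n => \sum_(i < n.+1) f i * g (n - i)%N.
Definition ps_qpow (k : nat) : ps := fun n => if n == k then 1 else 0.

(* multiplicative inverse of a series (meaningful when f 0 != 0):
   g 0 = (f 0)^-1, g (n+1) = - (f 0)^-1 * sum_{j=1}^{n+1} f j * g (n+1-j) *)
Fixpoint ps_inv_seq (f : ps) (n : nat) : seq K :=
  match n with
  | 0 => [:: (f 0%N)^-1]
  | n'.+1 => let s := ps_inv_seq f n' in
      rcons s (- (f 0%N)^-1 * \sum_(i < n'.+1) f i.+1 * nth 0 s (n' - i)%N)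
  end.
Definition ps_inv (f : ps) : ps := fun n => nth 0 (ps_inv_seq f n) n.

Definition qpoch_cq (c : K) (n : nat) : ps :=
  \big[ps_mul/ps_one]_(1 <= k < n.+1) ps_sub ps_one (ps_scale c (ps_qpow k)).

Definition ps_lim (F : nat -> ps) (S : ps) : Prop :=
  forall n, exists M, forall m, (M <= m)%N -> F m n = S n.
Definition ps_sum_to (F : nat -> ps) (S : ps) : Prop :=
  ps_lim (fun m => \big[ps_add/ps_zero]_(k < m) F k) S.
Definition ps_prod_to (F : nat -> ps) (S : ps) : Prop :=
  ps_lim (fun m => \big[ps_mul/ps_one]_(k < m) F k) S.

End PowerSeries.

(* Main.v *)
Require Import Defs.
From HB Require Import structures.
From mathcomp Require Import all_boot all_order all_algebra.
From Stdlib Require Import Ring Lia FunctionalExtensionality.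
Import Order.TTheory GRing.Theory Num.Theory.
Local Open Scope ring_scope.


Section PS.
Variable K : fieldType.
Local Notation ps := (ps K).
Implicit Types (f g h : ps) (p r : {poly K}).

Definition agree (n : nat) (f g : ps) := forall i, (i <= n)%N -> f i = g i.

Lemma mul_local {n f f' g g'} : agree n f f' -> agree n g g' ->
  agree n (ps_mul f g) (ps_mul f' g').
Proof.
move=> hf hg i hi; rewrite /ps_mul; apply: eq_bigr => j _.
have hj : (j <= n)%N by apply: leq_trans hi; rewrite -ltnS.
rewrite hf ?hg //; apply: leq_trans hi; exact: leq_subr.
Qed.

Definition ps_of (p : {poly K}) : ps := fun n => p`_n.

Lemma ps_of_mul p r : ps_of (p * r) = ps_mul (ps_of p) (ps_of r).
Proof. by apply: functional_extensionality => n; rewrite /ps_of coefM. Qed.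

Lemma ps_of_add p r : ps_of (p + r) = ps_add (ps_of p) (ps_of r).
Proof. by apply: functional_extensionality => n; rewrite /ps_of coefD. Qed.

Lemma ps_of_opp p : ps_of (- p) = ps_opp (ps_of p).
Proof. by apply: functional_extensionality => n; rewrite /ps_of coefN. Qed.

Lemma ps_of_C c : ps_of c%:P = ps_const c.
Proof. by apply: functional_extensionality => n; rewrite /ps_of coefC. Qed.

Lemma ps_of_1 : ps_of 1 = ps_one K.
Proof. by rewrite /ps_one /ps_zero -ps_of_C. Qed.

Lemma ps_of_0 : ps_of 0 = ps_zero K.
Proof. by rewrite /ps_one /ps_zero -ps_of_C. Qed.

Lemma ps_of_Xn k : ps_of 'X^k = ps_qpow K k.
Proof. by apply: functional_extensionality => n; rewrite /ps_of coefXn /ps_qpow; case: eqP. Qed.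

Definition tr n (f : ps) : {poly K} := \poly_(i < n.+1) f i.

Lemma agree_tr n f : agree n (ps_of (tr n f)) f.
Proof. by move=> i hi; rewrite /ps_of /tr coef_poly ltnS hi. Qed.

Lemma agree_sym {n f g} : agree n f g -> agree n g f.
Proof. by move=> h i hi; rewrite h. Qed.

Lemma ps_ext (f g : ps) : (forall n, f n = g n) -> f = g.
Proof. exact: functional_extensionality. Qed.

Lemma ps_mulC f g : ps_mul f g = ps_mul g f.
Proof.
apply: ps_ext => n.
rewrite (mul_local (agree_sym (agree_tr n f)) (agree_sym (agree_tr n g)) n (leqnn n)).
rewrite -ps_of_mul mulrC ps_of_mul.
by rewrite (mul_local (agree_tr n g) (agree_tr n f) n (leqnn n)).
Qed.

Lemma ps_mulA f g h : ps_mul f (ps_mul g h) = ps_mul (ps_mul f g) h.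
Proof.
apply: ps_ext => n.
have Hf := agree_sym (agree_tr n f); have Hg := agree_sym (agree_tr n g).
have Hh := agree_sym (agree_tr n h).
rewrite (mul_local Hf (mul_local Hg Hh) n (leqnn n)) (mul_local (mul_local Hf Hg) Hh n (leqnn n)).
by rewrite -!ps_of_mul mulrA.
Qed.

Lemma ps_mul1 f : ps_mul (ps_one K) f = f.
Proof.
apply: ps_ext => n.
have Hf := agree_sym (agree_tr n f).
rewrite -ps_of_1 (mul_local (fun i _ => erefl) Hf n (leqnn n)) -ps_of_mul mul1r.
by rewrite (agree_tr n f).
Qed.

Lemma ps_mul0 f : ps_mul (ps_zero K) f = ps_zero K.
Proof.
apply: ps_ext => n; rewrite /ps_mul big1.
  by rewrite /ps_zero /ps_const; case: ifP.
by move=> i _; rewrite /ps_zero /ps_const; case: ifP; rewrite mul0r.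
Qed.

Lemma ps_mulDl f g h : ps_mul (ps_add f g) h = ps_add (ps_mul f h) (ps_mul g h).
Proof.
by apply: ps_ext => n; rewrite /ps_mul /ps_add -big_split; apply: eq_bigr => i _; rewrite mulrDl.
Qed.

Lemma ps_addC f g : ps_add f g = ps_add g f.
Proof. by apply: ps_ext => n; rewrite /ps_add addrC. Qed.

Lemma ps_addA f g h : ps_add f (ps_add g h) = ps_add (ps_add f g) h.
Proof. by apply: ps_ext => n; rewrite /ps_add addrA. Qed.

Lemma ps_add0 f : ps_add (ps_zero K) f = f.
Proof. by apply: ps_ext => n; rewrite /ps_add /ps_zero /ps_const; case: ifP; rewrite add0r. Qed.

Lemma ps_scaleE c f : ps_scale c f = ps_mul (ps_const c) f.
Proof.
apply: ps_ext => n; rewrite /ps_mul big_ord_recl /= subn0 big1 ?addr0 //.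
by move=> i _; rewrite /ps_const /= mul0r.
Qed.


Lemma ps_inv_seq_size f n : size (ps_inv_seq f n) = n.+1.
Proof. by elim: n => [|n IH] //=; rewrite size_rcons IH. Qed.

Lemma ps_inv_seq_prefix f n m i : (i <= n)%N -> (n <= m)%N ->
  nth 0 (ps_inv_seq f m) i = nth 0 (ps_inv_seq f n) i.
Proof.
move=> hin; elim: m => [|m IH] hnm.
  by move: hnm; rewrite leqn0 => /eqP ->.
case: (ltngtP n m.+1) hnm => // [hlt|->] _; last by [].
rewrite /= nth_rcons ps_inv_seq_size ifT ?IH //.
by apply: leq_ltn_trans hin hlt.
Qed.

Lemma ps_invE f n i : (i <= n)%N -> ps_inv f i = nth 0 (ps_inv_seq f n) i.
Proof. by move=> h; rewrite /ps_inv (ps_inv_seq_prefix f i n i (leqnn i) h). Qed.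

Lemma ps_inv0 f : ps_inv f 0 = (f 0%N)^-1.
Proof. by []. Qed.

Lemma ps_invS f n : ps_inv f n.+1 =
  - (f 0%N)^-1 * \sum_(i < n.+1) f i.+1 * ps_inv f (n - i)%N.
Proof.
rewrite /ps_inv /= nth_rcons ps_inv_seq_size ltnn eqxx.
congr (_ * _); apply: eq_bigr => i _; congr (_ * _).
by rewrite (ps_inv_seq_prefix f (n - i)%N n (n - i)%N (leqnn _)) // leq_subr.
Qed.

Lemma ps_mulV f : f 0%N != 0 -> ps_mul f (ps_inv f) = ps_one K.
Proof.
move=> hf; apply: ps_ext => -[|n].
  by rewrite /ps_mul big_ord1 subn0 ps_inv0 mulfV.
rewrite /ps_mul big_ord_recl subn0 ps_invS mulrA mulrN mulfV // mulN1r.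
rewrite /ps_one /ps_const /=.
rewrite (eq_bigr (fun i : 'I_n.+1 => f i.+1 * ps_inv f (n - i)%N)).
  by rewrite addNr.
by move=> i _.
Qed.

Lemma ps_mul_one_r f : ps_mul f (ps_one K) = f.
Proof. by rewrite ps_mulC ps_mul1. Qed.

Lemma ps_inv_uniq f g : f 0%N != 0 -> ps_mul f g = ps_one K -> g = ps_inv f.
Proof.
move=> hf hfg.
by rewrite -[g]ps_mul_one_r -(ps_mulV f hf) ps_mulA (ps_mulC g) hfg ps_mul1.
Qed.

Lemma ps_mul_0 f g : ps_mul f g 0%N = f 0%N * g 0%N.
Proof. by rewrite /ps_mul big_ord1. Qed.

Lemma ps_invM f g : f 0%N != 0 -> g 0%N != 0 ->
  ps_inv (ps_mul f g) = ps_mul (ps_inv f) (ps_inv g).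
Proof.
move=> hf hg; symmetry; apply: ps_inv_uniq.
  by rewrite ps_mul_0 mulf_neq0.
rewrite -ps_mulA (ps_mulA g) (ps_mulC g) -ps_mulA (ps_mulV g hg) ps_mul_one_r.
exact: ps_mulV.
Qed.

Lemma ps_inv_0 f : f 0%N != 0 -> ps_inv f 0%N != 0.
Proof. by move=> h; rewrite ps_inv0 invr_eq0. Qed.

Lemma ps_of_sum (I : Type) (rr : seq I) (P : pred I) (F : I -> {poly K}) :
  ps_of (\sum_(i <- rr | P i) F i) = \big[@ps_add K/ps_zero K]_(i <- rr | P i) ps_of (F i).
Proof. exact: (big_morph ps_of ps_of_add ps_of_0). Qed.

Lemma ps_of_prod (I : Type) (rr : seq I) (P : pred I) (F : I -> {poly K}) :
  ps_of (\prod_(i <- rr | P i) F i) = \big[@ps_mul K/ps_one K]_(i <- rr | P i) ps_of (F i).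
Proof. exact: (big_morph ps_of ps_of_mul ps_of_1). Qed.

Lemma ps_of_scale c p : ps_of (c%:P * p) = ps_scale c (ps_of p).
Proof. by rewrite ps_of_mul ps_of_C ps_scaleE. Qed.

End PS.
Arguments agree {K}.
Arguments mul_local {K}.
Arguments ps_of {K}.
Arguments ps_of_mul {K}.
Arguments ps_of_add {K}.
Arguments ps_of_opp {K}.
Arguments ps_of_C {K}.
Arguments ps_of_1 {K}.
Arguments ps_of_0 {K}.
Arguments ps_of_Xn {K}.
Arguments tr {K}.
Arguments agree_tr {K}.
Arguments agree_sym {K}.
Arguments ps_ext {K}.
Arguments ps_mulC {K}.
Arguments ps_mulA {K}.
Arguments ps_mul1 {K}.
Arguments ps_mul0 {K}.
Arguments ps_mulDl {K}.
Arguments ps_addC {K}.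
Arguments ps_addA {K}.
Arguments ps_add0 {K}.
Arguments ps_scaleE {K}.
Arguments ps_inv_seq_size {K}.
Arguments ps_inv_seq_prefix {K}.
Arguments ps_invE {K}.
Arguments ps_inv0 {K}.
Arguments ps_invS {K}.
Arguments ps_mulV {K}.
Arguments ps_mul_one_r {K}.
Arguments ps_inv_uniq {K}.
Arguments ps_mul_0 {K}.
Arguments ps_invM {K}.
Arguments ps_inv_0 {K}.
Arguments ps_of_sum {K}.
Arguments ps_of_prod {K}.
Arguments ps_of_scale {K}.

HB.instance Definition _ (K : fieldType) :=
  Monoid.isComLaw.Build (ps K) (ps_zero K) (@ps_add K) (@ps_addA K) (@ps_addC K) (@ps_add0 K).
HB.instance Definition _ (K : fieldType) :=
  Monoid.isComLaw.Build (ps K) (ps_one K) (@ps_mul K) (@ps_mulA K) (@ps_mulC K) (@ps_mul1 K).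



Definition poch {R : comNzRingType} (c x : R) (lo hi : nat) : R :=
  \prod_(lo <= j < hi) (1 - c * x ^+ j).

Lemma poch_nn {R : comNzRingType} (c x : R) n : poch c x n n = 1.
Proof. by rewrite /poch big_geq. Qed.

Lemma poch_recr {R : comNzRingType} (c x : R) lo hi : (lo <= hi)%N ->
  poch c x lo hi.+1 = poch c x lo hi * (1 - c * x ^+ hi).
Proof. by move=> h; rewrite /poch big_nat_recr. Qed.

Section Fin.
Variable RR : comNzRingType.
Definition WR : Type := RR.
Definition wadd (x y : WR) : WR := x + y.
Definition wmul (x y : WR) : WR := x * y.
Definition wsub (x y : WR) : WR := x - y.
Definition wopp (x : WR) : WR := - x.
Definition w0 : WR := 0.
Definition w1 : WR := 1.
Lemma WRT : @ring_theory WR w0 w1 wadd wmul wsub wopp eq.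
Proof.
constructor => *; rewrite /wadd/wmul/wsub/wopp/w0/w1.
exact: add0r. exact: addrC. exact: addrA. exact: mul1r. exact: mulrC. exact: mulrA. exact: mulrDl. by []. exact: subrr.
Qed.
Add Ring WRr : WRT.
Ltac wr t := lazymatch t with
 | @Algebra.add _ ?x ?y => let a := wr x in let b := wr y in constr:(wadd a b)
 | @GRing.mul _ ?x ?y => let a := wr x in let b := wr y in constr:(wmul a b)
 | @Algebra.opp _ ?x => let a := wr x in constr:(wopp a)
 | @Algebra.zero _ => constr:(w0)
 | @GRing.one _ => constr:(w1)
 | _ => t end.
Ltac mring := lazymatch goal with |- @eq _ ?a ?b =>
  let a' := wr a in let b' := wr b in change (@eq WR a' b'); ring end.

Variables (aa ai bb qq : RR).
Hypothesis hai : ai * aa = 1.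

Definition Y k M := \sum_(n < M.+1)
  qq ^+ n * poch aa qq n.+1 M.+1 * poch bb qq (n + k).+1 (M + k).+1.
Definition ee k j := (- (bb * ai)) ^+ j * qq ^+ (j * k + 'C(j.+1, 2)).
Definition Z k M := \sum_(j < M.+1) ee k j *
  ((1 - ai) * poch aa qq 1 M.+1 * poch bb qq (k + j).+1 (M + k).+1
   + ai * poch aa qq (M - j).+1 M.+1).

Lemma Y0 k : Y k 0 = 1.
Proof. by rewrite /Y big_ord1 !poch_nn expr0 !mulr1. Qed.

Lemma Ystep k M : Y k M.+1 =
  (1 - aa * qq ^+ M.+1) * (1 - bb * qq ^+ (M.+1 + k)) * Y k M + qq ^+ M.+1.
Proof.
rewrite /Y big_ord_recr /= !poch_nn !mulr1; congr (_ + _).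
rewrite big_distrr; apply: eq_bigr => -[n hn] _ /=.
rewrite (poch_recr aa qq n.+1 M.+1) // addSn (poch_recr bb qq (n+k).+1 (M+k).+1); last by rewrite ltnS leq_add2r.
set u := poch _ _ _ _; set v := poch _ _ _ _; mring.
Qed.

Lemma Rec k M : Y k M.+1 =
  (1 - ai) * poch aa qq 1 M.+2 * poch bb qq k.+1 (M.+1 + k).+1 + ai
  - bb * ai * qq ^+ k.+1 * (1 - aa * qq ^+ M.+1) * Y k.+1 M.
Proof.
elim: M => [|M IH].
  rewrite Ystep !Y0 add1n /poch !big_nat1 expr1.
  lazymatch goal with |- ?L = ?R =>
    have E : L = R + qq * (1 - ai * aa) by mring end.
  by rewrite E hai subrr mulr0 addr0.
rewrite (Ystep k M.+1) (Ystep k.+1 M) IH.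
rewrite (poch_recr aa qq 1 M.+2) // (addSn M.+1 k) (poch_recr bb qq k.+1 (M.+1+k).+1); last first.
  by rewrite ltnS leq_addl.
rewrite !addSn !addnS.
have uv : qq ^+ k.+1 * qq ^+ M.+1 = qq ^+ (M + k).+2.
  by rewrite -exprD addSn addnS addnC.
lazymatch goal with |- ?L = ?R =>
  have E : L = R + qq ^+ M.+2 * (1 - ai * aa) + bb * ai * (1 - aa * qq ^+ M.+2)
     * (qq ^+ k.+1 * qq ^+ M.+1 - qq ^+ (M + k).+2) by mring end.
by rewrite E hai uv !subrr !mulr0 !addr0.
Qed.

Lemma ee0 k : ee k 0 = 1.
Proof. by rewrite /ee !expr0 mul1r. Qed.

Lemma ee_succ k i : ee k i.+1 = - (bb * ai) * qq ^+ k.+1 * ee k.+1 i.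
Proof.
have E : (i.+1 * k + 'C(i.+2, 2) = k.+1 + (i * k.+1 + 'C(i.+1, 2)))%N.
  rewrite binS bin1 mulSn mulnS; set C := 'C(_, _).
  rewrite -!plusE -!multE; lia.
by rewrite /ee E exprD exprS; mring.
Qed.

Lemma YZ M k : Y k M = Z k M.
Proof.
elim: M k => [|M IH] k.
  by rewrite Y0 /Z big_ord1 ee0 addn0 add0n subnn !poch_nn !mulr1 mul1r subrK.
rewrite Rec IH /Z [RHS]big_ord_recl ee0 mul1r subn0 poch_nn mulr1 addn0.
congr (_ + _); rewrite -mulNr big_distrr; apply: eq_bigr => i _.
rewrite lift0 ee_succ subSS (poch_recr aa qq 1 M.+1) // (poch_recr aa qq (M - i).+1 M.+1); last by rewrite ltnS leq_subr.
rewrite !addSn !addnS /=.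
mring.
Qed.
End Fin.

Section PS3.
Variable K : fieldType.
Local Notation ps := (ps K).
Implicit Types (f g h : ps) (p r : {poly K}) (c : K).

Lemma PST : @ring_theory ps (ps_zero K) (ps_one K) (@ps_add K) (@ps_mul K)
  (@ps_sub K) (@ps_opp K) eq.
Proof.
constructor => //.
- exact: ps_add0. - exact: ps_addC. - exact: ps_addA. - exact: ps_mul1.
- exact: ps_mulC. - exact: ps_mulA. - exact: ps_mulDl.
- move=> f; apply: ps_ext => n; rewrite /ps_add /ps_opp subrr.
  by rewrite /ps_zero /ps_const; case: ifP.
Qed.
Add Ring PSr : PST.

Definition PK : comNzRingType := {poly K}.
Add Ring Polyr : (WRT PK).
Ltac wr t := lazymatch t with
 | @Algebra.add _ ?x ?y => let a := wr x in let b := wr y in constr:(wadd PK a b)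
 | @GRing.mul _ ?x ?y => let a := wr x in let b := wr y in constr:(wmul PK a b)
 | @Algebra.opp _ ?x => let a := wr x in constr:(wopp PK a)
 | @Algebra.zero _ => constr:(w0 PK)
 | @GRing.one _ => constr:(w1 PK)
 | _ => t end.
Ltac pring := lazymatch goal with |- @eq _ ?a ?b =>
  let a' := wr a in let b' := wr b in change (@eq (WR PK) a' b'); ring end.


Lemma fac_ps c k : ps_sub (ps_one K) (ps_scale c (ps_qpow K k)) = ps_of (1 - c%:P * 'X^k).
Proof. by rewrite /ps_sub ps_of_add ps_of_1 ps_of_opp ps_of_scale ps_of_Xn. Qed.

Lemma qpoch_ps c n : qpoch_cq c n = ps_of (poch c%:P 'X 1 n.+1).
Proof. by rewrite /poch ps_of_prod /qpoch_cq; apply: eq_bigr => j _; rewrite fac_ps. Qed.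

Lemma ps_sum_eval (I : Type) (rr : seq I) (P : pred I) (F : I -> ps) n :
  (\big[@ps_add K/ps_zero K]_(i <- rr | P i) F i) n = \sum_(i <- rr | P i) F i n.
Proof.
apply: (big_morph (fun f : ps => f n)) => //.
by rewrite /ps_zero /ps_const; case: ifP.
Qed.

Lemma ps_sum_mull (I : Type) (rr : seq I) (P : pred I) (F : I -> ps) g :
  ps_mul (\big[@ps_add K/ps_zero K]_(i <- rr | P i) F i) g =
  \big[@ps_add K/ps_zero K]_(i <- rr | P i) ps_mul (F i) g.
Proof.
apply: (big_morph (fun f : ps => ps_mul f g)) => [f h|]; first exact: ps_mulDl.
exact: ps_mul0.
Qed.

Definition lowp N p := forall i, (i <= N)%N -> p`_i = 0.

Lemma lowp0 N : lowp N 0.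
Proof. by move=> i _; rewrite coef0. Qed.

Lemma lowpD N p r : lowp N p -> lowp N r -> lowp N (p + r).
Proof. by move=> hp hr i hi; rewrite coefD hp ?hr ?addr0. Qed.

Lemma lowpN N p : lowp N p -> lowp N (- p).
Proof. by move=> hp i hi; rewrite coefN hp ?oppr0. Qed.

Lemma lowpB N p r : lowp N p -> lowp N r -> lowp N (p - r).
Proof. by move=> hp hr; apply: lowpD => //; apply: lowpN. Qed.

Lemma lowpMl N p r : lowp N p -> lowp N (r * p).
Proof.
move=> hp i hi; rewrite coefM big1 // => j _; rewrite hp ?mulr0 //.
by apply: leq_trans hi; apply: leq_subr.
Qed.

Lemma lowpMr N p r : lowp N p -> lowp N (p * r).
Proof. by move=> hp; rewrite mulrC; apply: lowpMl. Qed.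

Lemma lowpX N d r : (N < d)%N -> lowp N ('X^d * r).
Proof.
move=> hd i hi; rewrite coefXnM ifT //; apply: leq_ltn_trans hi hd.
Qed.

Lemma lowp_sum N (I : Type) (rr : seq I) (P : pred I) (F : I -> {poly K}) :
  (forall i, P i -> lowp N (F i)) -> lowp N (\sum_(i <- rr | P i) F i).
Proof. by move=> h; apply: big_ind => //; [apply: lowp0 | apply: lowpD]. Qed.

Lemma poch_low N c lo hi : (N < lo)%N -> lowp N (poch c%:P 'X lo hi - 1).
Proof.
move=> hlo; rewrite /poch big_nat_cond.
apply: (big_ind (fun p => lowp N (p - 1))).
- by rewrite subrr; apply: lowp0.
- move=> x y hx hy.
  have -> : x * y - 1 = (x - 1) * (y - 1) + (x - 1) + (y - 1).
    by pring.
  by apply: lowpD => //; apply: lowpD => //; apply: lowpMr.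
- move=> j /andP [/andP [hj _] _].
  rewrite addrAC subrr add0r mulrC; apply: lowpN; apply: lowpX.
  exact: leq_trans hlo hj.
Qed.

Lemma lowp_agree N p r : lowp N (p - r) -> agree N (ps_of p) (ps_of r).
Proof.
by move=> h i hi; apply/eqP; rewrite -subr_eq0 /ps_of -coefB h.
Qed.

Lemma lim_agree (F : nat -> ps) S N : ps_lim F S ->
  exists M, forall m, (M <= m)%N -> agree N (F m) S.
Proof.
move=> hl; elim: N => [|N [M1 IH]].
  have [M hM] := hl 0%N; exists M => m hm i; rewrite leqn0 => /eqP ->; exact: hM.
have [M2 hM2] := hl N.+1; exists (maxn M1 M2) => m; rewrite geq_max => /andP [h1 h2] i.
rewrite leq_eqVlt => /orP [/eqP ->|hi]; first exact: hM2.
exact: IH.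
Qed.

Lemma inv_seq_local n f g : agree n f g -> ps_inv_seq f n = ps_inv_seq g n.
Proof.
elim: n => [|n IH] h /=; first by rewrite h.
rewrite IH; last by move=> i hi; apply: h; apply: leqW.
rewrite h //; congr (rcons _ (_ * _)); apply: eq_bigr => i _; rewrite h //.
Qed.

Lemma inv_local n f g : agree n f g -> agree n (ps_inv f) (ps_inv g).
Proof.
move=> h i hi; rewrite (ps_invE f n i hi) (ps_invE g n i hi).
by rewrite (inv_seq_local n f g h).
Qed.

End PS3.

Section Main.
Variable K : fieldType.
Local Notation ps := (ps K).
Implicit Types (f g h : ps) (p r : {poly K}) (c : K).
Add Ring PSr4 : (PST K).
Definition PK4 : comNzRingType := {poly K}.
Add Ring Polyr4 : (WRT PK4).
Ltac wr t := lazymatch t with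
 | @Algebra.add _ ?x ?y => let a := wr x in let b := wr y in constr:(wadd PK4 a b)
 | @GRing.mul _ ?x ?y => let a := wr x in let b := wr y in constr:(wmul PK4 a b)
 | @Algebra.opp _ ?x => let a := wr x in constr:(wopp PK4 a)
 | @Algebra.zero _ => constr:(w0 PK4)
 | @GRing.one _ => constr:(w1 PK4)
 | _ => t end.
Ltac pring := rewrite /=; lazymatch goal with |- @eq _ ?a ?b =>
  let a' := wr a in let b' := wr b in change (@eq (WR PK4) a' b'); ring end.

Lemma ttt6 c d m : poch c%:P 'X 1 m.+1 * poch d%:P 'X 1 m.+1 * ((1 - c%:P * 'X^(m.+1)) * (1 - d%:P * 'X^(m.+1))) =
  poch c%:P 'X 1 m.+1 * (1 - c%:P * 'X^(m.+1)) * (poch d%:P 'X 1 m.+1 * (1 - d%:P * 'X^(m.+1))).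
Proof. pring. Qed.
Lemma poch_cat (R : comNzRingType) (c x : R) lo mid hi : (lo <= mid)%N -> (mid <= hi)%N ->
  poch c x lo hi = poch c x lo mid * poch c x mid hi.
Proof. by move=> h1 h2; rewrite /poch (big_cat_nat h1 h2). Qed.

Lemma poch_coef0 c lo hi : (0 < lo)%N -> (poch c%:P 'X lo hi)`_0 = 1.
Proof.
move=> h; have := poch_low K 0 c lo hi h 0%N (leqnn 0).
by rewrite coefB coef1 eqxx /= => /eqP; rewrite subr_eq0 => /eqP.
Qed.

Lemma ps_of_poch0 c lo hi : (0 < lo)%N -> ps_of (poch c%:P 'X lo hi) 0%N != 0.
Proof. by move=> h; rewrite /ps_of poch_coef0 // oner_neq0. Qed.

Lemma ps_of_pochM0 c d lo hi lo' hi' : (0 < lo)%N -> (0 < lo')%N ->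
  ps_of (poch c%:P 'X lo hi * poch d%:P 'X lo' hi') 0%N != 0.
Proof. by move=> h h'; rewrite /ps_of coef0M !poch_coef0 // mulr1 oner_neq0. Qed.

Lemma ps_inv_one : ps_inv (ps_one K) = ps_one K.
Proof.
symmetry; apply: ps_inv_uniq; last by rewrite ps_mul1.
by rewrite /ps_one /ps_const /= oner_neq0.
Qed.

Lemma ps_scale1 f : ps_scale 1 f = f.
Proof. by apply: ps_ext => n; rewrite /ps_scale mul1r. Qed.

Lemma qpow_low d f i : (i < d)%N -> ps_mul (ps_qpow K d) f i = 0.
Proof.
move=> h; rewrite /ps_mul big1 // => j _; rewrite /ps_qpow.
case: eqP => [ej|]; last by rewrite mul0r.
by move: h; rewrite -ej ltnNge -ltnS ltn_ord.
Qed.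

Lemma sum_conv (F : nat -> ps) : (forall k i, (i < k)%N -> F k i = 0) ->
  exists S, ps_sum_to F S.
Proof.
move=> hF; exists (fun n => (\big[@ps_add K/ps_zero K]_(k < n.+1) F k) n).
move=> n; exists n.+1 => m hm; rewrite !ps_sum_eval.
rewrite -(subnKC hm) big_split_ord /= [X in _ + X]big1 ?addr0 // => i _.
by apply: hF; rewrite ltnS leq_addr.
Qed.

Lemma binC_ge k : (k <= 'C(k.+1, 2))%N.
Proof.
by case: k => // k; rewrite binS bin1 leq_addl.
Qed.


Variables (a b : K).
Hypothesis ha : a != 0.

Definition T1 n := ps_mul (ps_qpow K n.+1)
  (ps_mul (ps_inv (qpoch_cq a n.+1)) (ps_inv (qpoch_cq b n.+1))).
Definition T2 n := ps_scale ((-1) ^+ n.+1 * b ^+ n.+1 * a ^- n.+1)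
  (ps_mul (ps_qpow K 'C(n.+2, 2)) (ps_inv (qpoch_cq b n.+1))).
Definition T3 n := ps_scale ((-1) ^+ n * b ^+ n * a ^- n) (ps_qpow K 'C(n.+1, 2)).
Definition PP k := ps_inv (ps_mul (ps_sub (ps_one K) (ps_scale a (ps_qpow K k.+1)))
                   (ps_sub (ps_one K) (ps_scale b (ps_qpow K k.+1)))).
Definition PA n := poch a%:P 'X 1 n.+1.
Definition PB n := poch b%:P 'X 1 n.+1.
Definition DD n := ps_of (PA n * PB n).

Lemma DD0 n : DD n 0%N != 0.
Proof. exact: ps_of_pochM0. Qed.

Lemma fac0 c k : ((1 - c%:P * 'X^(k.+1)) : {poly K})`_0 = 1.
Proof. by rewrite coefB coef1 coefCM coefXn /= mulr0 subr0. Qed.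

Lemma PP_prod m : \big[@ps_mul K/ps_one K]_(k < m) PP k = ps_inv (DD m).
Proof.
elim: m => [|m IH].
  by rewrite big_ord0 /DD /PA /PB !poch_nn mulr1 ps_of_1 ps_inv_one.
rewrite big_ord_recr /= IH /PP !fac_ps -ps_of_mul -ps_invM; last 2 first.
- exact: DD0.
- by rewrite /ps_of coef0M !fac0 mulr1 oner_neq0.
rewrite /DD -ps_of_mul /PA /PB !(poch_recr _ _ 1 m.+1) //.
by congr (ps_inv (ps_of _)); apply: ttt6.
Qed.


Lemma qpow0 f : ps_mul (ps_qpow K 0) f = f.
Proof. exact: ps_mul1. Qed.

Lemma L_eq M : ps_mul (ps_add (ps_one K) (\big[@ps_add K/ps_zero K]_(k < M) T1 k)) (DD M)
  = ps_of (Y _ a%:P b%:P 'X 0 M).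
Proof.
pose U n := ps_mul (ps_qpow K n) (ps_mul (ps_inv (qpoch_cq a n)) (ps_inv (qpoch_cq b n))).
have -> : ps_add (ps_one K) (\big[@ps_add K/ps_zero K]_(k < M) T1 k)
    = \big[@ps_add K/ps_zero K]_(n < M.+1) U n.
  rewrite big_ord_recl; congr ps_add.
  by rewrite /U /qpoch_cq !big_geq // ps_inv_one ps_mul1 qpow0.
rewrite ps_sum_mull /Y ps_of_sum; apply: eq_bigr => -[n hn] _ /=.
rewrite !addn0 /DD /PA /PB (poch_cat _ a%:P 'X 1 n.+1 M.+1) // (poch_cat _ b%:P 'X 1 n.+1 M.+1) //.
rewrite !ps_of_mul ps_of_Xn /U !qpoch_ps.
set A := ps_of (poch a%:P 'X 1 n.+1); set B := ps_of (poch b%:P 'X 1 n.+1).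
set A' := ps_of (poch a%:P 'X n.+1 M.+1); set B' := ps_of (poch b%:P 'X n.+1 M.+1).
have hA : A 0%N != 0 by apply: ps_of_poch0.
have hB : B 0%N != 0 by apply: ps_of_poch0.
transitivity (ps_mul (ps_mul (ps_mul (ps_qpow K n) A') B')
   (ps_mul (ps_mul A (ps_inv A)) (ps_mul B (ps_inv B)))); first by ring.
by rewrite (ps_mulV A hA) (ps_mulV B hB) ps_mul1 ps_mul_one_r.
Qed.


Definition cc j := (-1) ^+ j * b ^+ j * a ^- j.

Lemma ee_C j : ee _ (a^-1)%:P b%:P 'X 0 j = (cc j)%:P * 'X^('C(j.+1, 2)).
Proof.
rewrite /ee /cc muln0 add0n; congr (_ * _).
rewrite -polyCM -polyCN -polyC_exp; congr polyC.
by rewrite -[- (b * _)]mulN1r !exprMn exprVn mulrA.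
Qed.

Definition Z2 M := \sum_(j < M.+1) ee _ (a^-1)%:P b%:P 'X 0 j * (PA M * poch b%:P 'X j.+1 M.+1).

Lemma W_eq M : ps_mul (ps_add (ps_one K) (\big[@ps_add K/ps_zero K]_(k < M) T2 k)) (DD M)
  = ps_of (Z2 M).
Proof.
pose V j := ps_scale (cc j) (ps_mul (ps_qpow K 'C(j.+1, 2)) (ps_inv (qpoch_cq b j))).
have -> : ps_add (ps_one K) (\big[@ps_add K/ps_zero K]_(k < M) T2 k)
    = \big[@ps_add K/ps_zero K]_(n < M.+1) V n.
  rewrite big_ord_recl; congr ps_add.
  rewrite /V /qpoch_cq /cc !big_geq // ps_inv_one !expr0 invr1 !mulr1 ps_scale1.
  by rewrite ps_mul_one_r.
rewrite ps_sum_mull /Z2 ps_of_sum; apply: eq_bigr => -[j hj] _ /=.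
rewrite ee_C /DD /PB (poch_cat _ b%:P 'X 1 j.+1 M.+1) //.
rewrite !ps_of_mul ps_of_Xn ps_of_C /V ps_scaleE !qpoch_ps.
set B := ps_of (poch b%:P 'X 1 j.+1); set B' := ps_of (poch b%:P 'X j.+1 M.+1).
set A := ps_of (PA M).
have hB : B 0%N != 0 by apply: ps_of_poch0.
transitivity (ps_mul (ps_mul (ps_mul (ps_const (cc j)) (ps_qpow K 'C(j.+1, 2))) (ps_mul A B'))
   (ps_mul B (ps_inv B))); first by ring.
by rewrite (ps_mulV B hB) ps_mul_one_r.
Qed.


Definition Z3 M := \sum_(j < M) ee _ (a^-1)%:P b%:P 'X 0 j.
Definition Z3' M := \sum_(j < M.+1) ee _ (a^-1)%:P b%:P 'X 0 j * poch a%:P 'X (M - j).+1 M.+1.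

Lemma T3_eq M : \big[@ps_add K/ps_zero K]_(k < M) T3 k = ps_of (Z3 M).
Proof.
rewrite /Z3 ps_of_sum; apply: eq_bigr => j _.
by rewrite ee_C ps_of_mul ps_of_C ps_of_Xn /T3 ps_scaleE.
Qed.

Lemma hai : (a^-1)%:P * a%:P = 1 :> {poly K}.
Proof. by rewrite -polyCM mulVf. Qed.

Lemma Y_split M : Y _ a%:P b%:P 'X 0 M = (1 - (a^-1)%:P) * Z2 M + (a^-1)%:P * Z3' M.
Proof.
rewrite (YZ _ _ _ _ _ hai M 0) /Z /Z2 /Z3' !big_distrr -big_split.
apply: eq_bigr => j _; rewrite add0n addn0 /PA.
set e := ee _ _ _ _ _ _; set u := poch _ _ 1 _; set v := poch _ _ _ _; set w := poch _ _ _ _.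
pring.
Qed.

Lemma lowpXs n d p : lowp K n p -> lowp K (n + d) ('X^d * p).
Proof.
move=> h i hi; rewrite coefXnM; case: ifP => // /negbT; rewrite -leqNgt => hd.
by apply: h; rewrite leq_subLR addnC.
Qed.

Lemma lowp_weak n m p : lowp K n p -> (m <= n)%N -> lowp K m p.
Proof. by move=> h hm i hi; apply: h; apply: leq_trans hi hm. Qed.

Lemma E_low N M : (N < M)%N -> lowp K N (Z3' M - Z3 M).
Proof.
move=> hNM; rewrite /Z3' big_ord_recr /= /Z3.
set X := \sum_(i < M) _; set S := \sum_(i < M) _.
have -> : X + ee _ (a^-1)%:P b%:P 'X 0 M * poch a%:P 'X (M - M).+1 M.+1 - S
   = (X - S) + ee _ (a^-1)%:P b%:P 'X 0 M * poch a%:P 'X (M - M).+1 M.+1.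
  by rewrite addrAC.
apply: lowpD.
  rewrite /X /S -sumrB; apply: lowp_sum => -[j hj] _ /=.
  rewrite -{2}[ee _ _ _ _ _ _]mulr1 -mulrBr ee_C -mulrA; apply: lowpMl.
  apply: (lowp_weak (M - j + 'C(j.+1, 2))); first by apply: lowpXs; apply: poch_low.
  rewrite -(subnK (ltnW hj)) in hNM.
  apply: leq_trans (ltnW hNM) _; rewrite leq_add2l.
  exact: binC_ge.
rewrite ee_C -mulrA mulrCA; apply: lowpX.
by apply: leq_trans hNM (binC_ge M).
Qed.


Lemma low_mul_coef N p g : lowp K N p -> ps_mul (ps_of p) g N = 0.
Proof. by move=> h; rewrite /ps_mul big1 // => i _; rewrite /ps_of h ?mul0r // -ltnS. Qed.

Lemma alg (L W T E D iD : ps) c1 c2 : ps_mul D iD = ps_one K ->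
  ps_mul L D = ps_add (ps_add (ps_scale c1 (ps_mul W D)) (ps_scale c2 T)) (ps_scale c2 E) ->
  L = ps_add (ps_add (ps_scale c1 W) (ps_scale c2 (ps_mul T iD))) (ps_scale c2 (ps_mul E iD)).
Proof.
move=> hD hL.
have -> : L = ps_mul (ps_mul L D) iD by rewrite -ps_mulA hD ps_mul_one_r.
rewrite hL !ps_scaleE.
transitivity (ps_add (ps_add (ps_mul (ps_mul (ps_const c1) W) (ps_mul D iD))
     (ps_mul (ps_const c2) (ps_mul T iD))) (ps_mul (ps_const c2) (ps_mul E iD))).
  by ring.
by rewrite hD ps_mul_one_r.
Qed.

Lemma key N M : (N < M)%N ->
  ps_add (ps_one K) (\big[@ps_add K/ps_zero K]_(k < M) T1 k) N =
  ps_add (ps_scale (1 - a^-1) (ps_add (ps_one K) (\big[@ps_add K/ps_zero K]_(k < M) T2 k)))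
         (ps_scale a^-1 (ps_mul (\big[@ps_add K/ps_zero K]_(k < M) T3 k)
                                (\big[@ps_mul K/ps_one K]_(k < M) PP k))) N.
Proof.
move=> hNM.
have hD : DD M 0%N != 0 by apply: DD0.
have h1 : (1 - (a^-1)%:P) = (1 - a^-1)%:P :> {poly K} by rewrite polyCB polyC1.
have hY : Y _ a%:P b%:P 'X 0 M = (1 - a^-1)%:P * Z2 M + (a^-1)%:P * Z3 M
    + (a^-1)%:P * (Z3' M - Z3 M).
  by rewrite Y_split h1; set x := Z2 M; set y := Z3' M; set z := Z3 M; pring.
have hLD : ps_mul (ps_add (ps_one K) (\big[@ps_add K/ps_zero K]_(k < M) T1 k)) (DD M) =
  ps_add (ps_add (ps_scale (1 - a^-1)
    (ps_mul (ps_add (ps_one K) (\big[@ps_add K/ps_zero K]_(k < M) T2 k)) (DD M)))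
    (ps_scale a^-1 (\big[@ps_add K/ps_zero K]_(k < M) T3 k)))
    (ps_scale a^-1 (ps_of (Z3' M - Z3 M))).
  by rewrite L_eq hY ps_of_add ps_of_add !ps_of_scale W_eq T3_eq.
rewrite (alg _ _ _ _ _ _ _ _ (ps_mulV _ hD) hLD) PP_prod.
rewrite {1}/ps_add {3}/ps_scale low_mul_coef ?mulr0 ?addr0 //.
exact: E_low.
Qed.


Lemma DD_agree n m : (n <= m)%N -> agree n (DD m) (DD n).
Proof.
move=> hnm; apply: lowp_agree.
rewrite /PA /PB (poch_cat _ a%:P 'X 1 n.+1 m.+1) // (poch_cat _ b%:P 'X 1 n.+1 m.+1) //.
set u := poch a%:P 'X 1 n.+1; set v := poch b%:P 'X 1 n.+1.
have hx := poch_low K n a n.+1 m.+1 (ltnSn n).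
have hy := poch_low K n b n.+1 m.+1 (ltnSn n).
move: hx hy; set x := poch a%:P 'X n.+1 m.+1; set y := poch b%:P 'X n.+1 m.+1 => hx hy.
have -> : u * x * (v * y) - u * v = (u * v) * ((x - 1) * (y - 1) + (x - 1) + (y - 1)) by pring.
by apply: lowpMl; apply: lowpD => //; apply: lowpD => //; apply: lowpMl.
Qed.

Lemma main_gen :
  ((exists S1, ps_sum_to T1 S1) /\ (exists S2, ps_sum_to T2 S2) /\
   (exists S3, ps_sum_to T3 S3) /\ (exists Pr, ps_prod_to PP Pr)) /\
  forall S1 S2 S3 Pr,
    ps_sum_to T1 S1 -> ps_sum_to T2 S2 -> ps_sum_to T3 S3 -> ps_prod_to PP Pr ->
    forall N : nat,
      ps_add (ps_one _) S1 N =
      ps_add (ps_scale (1 - a^-1) (ps_add (ps_one _) S2))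
             (ps_scale a^-1 (ps_mul S3 Pr)) N.
Proof.
split.
  split; first by apply: sum_conv => k i hi; apply: qpow_low; apply: ltnW.
  split.
    apply: sum_conv => k i hi; rewrite /T2 /ps_scale qpow_low ?mulr0 //.
    by apply: leq_trans hi _; apply: leq_trans (binC_ge k.+1); apply: leqW.
  split.
    apply: sum_conv => k i hi; rewrite /T3 /ps_scale /ps_qpow.
    case: eqP => [ei|]; last by rewrite mulr0.
    by move: hi; rewrite ei ltnNge binC_ge.
  exists (fun n => ps_inv (DD n) n) => n; exists n => m hm.
  by rewrite PP_prod; apply: (inv_local K n _ _ (DD_agree n m hm) n (leqnn n)).
move=> S1 S2 S3 Pr h1 h2 h3 h4 N.
have [m1 hm1] := lim_agree _ _ _ N h1.
have [m2 hm2] := lim_agree _ _ _ N h2.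
have [m3 hm3] := lim_agree _ _ _ N h3.
have [m4 hm4] := lim_agree _ _ _ N h4.
pose M := (m1 + m2 + m3 + m4 + N).+1.
have hNM : (N < M)%N by rewrite /M ltnS leq_addl.
have l1 : (m1 <= M)%N by apply/ssrnat.leP; rewrite /M -!plusE; lia.
have l2 : (m2 <= M)%N by apply/ssrnat.leP; rewrite /M -!plusE; lia.
have l3 : (m3 <= M)%N by apply/ssrnat.leP; rewrite /M -!plusE; lia.
have l4 : (m4 <= M)%N by apply/ssrnat.leP; rewrite /M -!plusE; lia.
have q1 := hm1 M l1 N (leqnn N).
have q2 := hm2 M l2 N (leqnn N).
have q34 := mul_local N _ _ _ _ (hm3 M l3) (hm4 M l4) N (leqnn N).
have hk := key N M hNM.
have E1 : forall f g, ps_add f g N = f N + g N by [].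
have Es : forall c f, ps_scale c f N = c * f N by [].
move: hk; rewrite !E1 !Es !E1 q1 q2 q34 => hk.
exact: hk.
Qed.

End Main.

Theorem mainTheorem1 :
  let a := var_a in
  let b := var_b in
  (* summands of sum_{n>=1} q^n / ((aq;q)_n (bq;q)_n), indexed from n = 1 *)
  let T1 : nat -> ps Qab := fun n =>
    ps_mul (ps_qpow _ n.+1)
      (ps_mul (ps_inv (qpoch_cq a n.+1)) (ps_inv (qpoch_cq b n.+1))) in
  (* summands of sum_{n>=1} (-1)^n q^{binom(n+1,2)} b^n a^{-n} / (bq;q)_n *)
  let T2 : nat -> ps Qab := fun n =>
    ps_scale ((-1) ^+ n.+1 * b ^+ n.+1 * a ^- n.+1)
      (ps_mul (ps_qpow _ 'C(n.+2, 2)) (ps_inv (qpoch_cq b n.+1))) in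
  (* summands of sum_{n>=0} (-1)^n q^{binom(n+1,2)} b^n a^{-n} *)
  let T3 : nat -> ps Qab := fun n =>
    ps_scale ((-1) ^+ n * b ^+ n * a ^- n) (ps_qpow _ 'C(n.+1, 2)) in
  (* factors of prod_{k>=1} 1/((1 - a q^k)(1 - b q^k)), indexed from k = 1 *)
  let P : nat -> ps Qab := fun k =>
    ps_inv (ps_mul (ps_sub (ps_one _) (ps_scale a (ps_qpow _ k.+1)))
                   (ps_sub (ps_one _) (ps_scale b (ps_qpow _ k.+1)))) in
  ((exists S1, ps_sum_to T1 S1) /\ (exists S2, ps_sum_to T2 S2) /\
   (exists S3, ps_sum_to T3 S3) /\ (exists Pr, ps_prod_to P Pr)) /\
  forall S1 S2 S3 Pr,
    ps_sum_to T1 S1 -> ps_sum_to T2 S2 -> ps_sum_to T3 S3 -> ps_prod_to P Pr ->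
    forall N : nat,
      ps_add (ps_one _) S1 N =
      ps_add (ps_scale (1 - a^-1) (ps_add (ps_one _) S2))
             (ps_scale a^-1 (ps_mul S3 Pr)) N.
Proof.
have ha : var_a != 0 by rewrite /var_a tofrac_eq0 polyX_eq0.
exact: (@main_gen Qab var_a var_b ha).
Qed.
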